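(* Let $\varphi\in\mathcal L$ be falsifiable (on some bi-relational model) and let $\Sigma$ be the set of subformulas of $\varphi$. Then $\varphi$ is falsified (i.e. $\varphi\notin\ell(w)$ for some world $w$) in some ultimately periodic $\Sigma$-quasimodel of height at most $|\Sigma|+1$.
   Context: $\mathcal L$: formulas with $\wedge,\vee,\Rightarrow,\Leftarrow,\mathsf X,\mathsf Y,\mathsf G,\mathsf H,\mathsf U,\mathsf S$. Bi-relational model: $(W,T,\le,S,[\![\cdot]\!])$ with $(W,\le)$ linear, $S$ a bijection on $T$, $[\![p]\!]$ downward closed in the first coordinate, Kripke clauses ($\Rightarrow$ looks at all $v\le w$, $\Leftarrow$ at some $v\ge w$ with $\varphi$ true and $\psi$ false) and linear-time clauses along $S$; falsifiable means $[\![\varphi]\!]\ne W\times T$ in some model. For subformula-closed $\Sigma$: a $\Sigma$-type is $\Phi\subseteq\Sigma$ with Boolean closure for $\wedge,\vee$, ($\varphi\Rightarrow\psi\in\Phi$ implies $\varphi\notin\Phi$ or $\psi\in\Phi$; $\psi\in\Phi$ implies $\varphi\Rightarrow\psi\in\Phi$), ($\varphi\Leftarrow\psi\in\Phi$ implies $\varphi\in\Phi$; $\varphi\in\Phi,\psi\notin\Phi$ imply $\varphi\Leftarrow\psi\in\Phi$). A $\Sigma$-labelled space is $(W,\le,\ell)$, $(W,\le)$ a disjoint union of linear posets (its linear components), $\ell$ into $\Sigma$-types, $w\le v\Rightarrow\ell(w)\supseteq\ell(v)$, with $\Rightarrow$-formulas outside $\ell(w)$ witnessed at some $v\le w$ and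 $\Leftarrow$-formulas in $\ell(w)$ witnessed at some $v\ge w$. A relation $R$ is convex (images/preimages of points convex), fully confluent (forth–down: $x\le x'Ry'\Rightarrow\exists y\,xRy\le y'$; forth–up: $x'\ge xRy\Rightarrow\exists y'\,x'Ry'\ge y$; back–down: $x'Ry'\ge y\Rightarrow\exists x\,x'\ge xRy$; back–up: $xRy\le y'\Rightarrow\exists x'\,x\le x'Ry'$), bi-serial, and sensible (for each $wRv$ and formulas in $\Sigma$: $\mathsf X\varphi\in\ell(w)\iff\varphi\in\ell(v)$; $\mathsf Y\varphi\in\ell(v)\iff\varphi\in\ell(w)$; $\mathsf G\varphi\in\ell(w)\iff\varphi\in\ell(w)\wedge\mathsf G\varphi\in\ell(v)$; $\mathsf H\varphi\in\ell(v)\iff\varphi\in\ell(v)\wedge\mathsf H\varphi\in\ell(w)$; $\varphi\,\mathsf U\,\psi\in\ell(w)\iff\psi\in\ell(w)\vee(\varphi\in\ell(w)\wedge\varphi\,\mathsf U\,\psi\in\ell(v))$; $\varphi\,\mathsf S\,\psi\in\ell(v)\iff\psi\in\ell(v)\vee(\varphi\in\ell(v)\wedge\varphi\,\mathsf S\,\psi\in\ell(w))$), and $\omega$-sensible ($\mathsf G\varphi\in\Sigma\setminus\ell(w)$ gives $v$ with $wR^nv$, $\varphi\notin\ell(v)$; $\mathsf H\varphi\in\Sigma\setminus\ell(w)$ gives $v$ with $vR^nw$, $\varphi\notin\ell(v)$; $\varphi\,\mathsf U\,\psi\in\ell(w)$ gives $v$ with $wR^nv$, $\psi\in\ell(v)$;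 $\varphi\,\mathsf S\,\psi\in\ell(w)$ gives $v$ with $vR^nw$, $\psi\in\ell(v)$; $n\ge0$). A $\Sigma$-quasimodel is a $\Sigma$-labelled space with a bi-serial, fully confluent, convex, sensible, $\omega$-sensible relation. Height: supremum of $n$ with a chain $w_1<\dots<w_n$. An ultimately periodic $\Sigma$-quasimodel is a $\Sigma$-quasimodel $(W,\le,\ell,R)$ for which there exist integers $i,i'\ge0$, $l,l'\ge1$ and a map $\pi\colon W\to T:=\{-(i'+l'-1),\dots,i+l-1\}$ such that each fibre $\pi^{-1}(t)$ is exactly one linear component of $W$, and $wRv$ implies $\pi(w)R_T\pi(v)$, where $R_T$ consists of the pairs $(k,k+1)$ for $-(i'+l'-1)\le k\le i+l-2$ together with $(i+l-1,i)$ and $(-i',-(i'+l'-1))$ (a ''double lasso'': a middle segment through $0$ with a loop at each end). *)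

(* Defs.v *)
From Stdlib Require Import List ZArith Sorted.
Import ListNotations.

Inductive form : Type :=
| Var   : nat -> form
| And   : form -> form -> form
| Or    : form -> form -> form
| Imp   : form -> form -> form
| Coimp : form -> form -> form
| Next  : form -> form
| Prev  : form -> form
| Glob  : form -> form
| Hist  : form -> form
| Until : form -> form -> form
| Since : form -> form -> form.

Definition form_eq_dec (a b : form) : {a = b} + {a <> b}.
Proof. decide equality; apply PeanoNat.Nat.eq_dec. Defined.

Fixpoint subf (f : form) : list form :=
  f :: match f with
       | Var _ => []
       | And a b | Or a b | Imp a b | Coimp a b | Until a b | Since a b =>
           subf a ++ subf b
       | Next a | Prev a | Glob a | Hist a => subf a
       end.

Definition card_sub (f : form) : nat := length (nodup form_eq_dec (subf f)).

Definition is_linear_order {W : Type} (le : W -> W -> Prop) : Prop :=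
  (forall x, le x x) /\
  (forall x y z, le x y -> le y z -> le x z) /\
  (forall x y, le x y -> le y x -> x = y) /\
  (forall x y, le x y \/ le y x).

Definition iterate {T : Type} (n : nat) (f : T -> T) (t : T) : T := Nat.iter n f t.

Fixpoint sat {W T : Type} (le : W -> W -> Prop) (S Sinv : T -> T)
  (V : nat -> W -> T -> Prop) (f : form) (w : W) (t : T) : Prop :=
  match f with
  | Var p => V p w t
  | And a b => sat le S Sinv V a w t /\ sat le S Sinv V b w t
  | Or a b => sat le S Sinv V a w t \/ sat le S Sinv V b w t
  | Imp a b => forall v, le v w -> sat le S Sinv V a v t -> sat le S Sinv V b v t
  | Coimp a b => exists v, le w v /\ sat le S Sinv V a v t /\ ~ sat le S Sinv V b v t
  | Next a => sat le S Sinv V a w (S t)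
  | Prev a => sat le S Sinv V a w (Sinv t)
  | Glob a => forall n, sat le S Sinv V a w (iterate n S t)
  | Hist a => forall n, sat le S Sinv V a w (iterate n Sinv t)
  | Until a b => exists n, sat le S Sinv V b w (iterate n S t) /\
                  forall k, k < n -> sat le S Sinv V a w (iterate k S t)
  | Since a b => exists n, sat le S Sinv V b w (iterate n Sinv t) /\
                  forall k, k < n -> sat le S Sinv V a w (iterate k Sinv t)
  end.

Definition falsifiable (phi : form) : Prop :=
  exists (W T : Type) (le : W -> W -> Prop) (S Sinv : T -> T)
         (V : nat -> W -> T -> Prop),
    is_linear_order le /\
    (forall t, S (Sinv t) = t) /\ (forall t, Sinv (S t) = t) /\
    (forall p w v t, le v w -> V p w t -> V p v t) /\
    exists w t, ~ sat le S Sinv V phi w t.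

Definition is_type (Sig : list form) (P : form -> Prop) : Prop :=
  (forall f, P f -> In f Sig) /\
  (forall a b, In (And a b) Sig -> (P (And a b) <-> P a /\ P b)) /\
  (forall a b, In (Or a b) Sig -> (P (Or a b) <-> P a \/ P b)) /\
  (forall a b, In (Imp a b) Sig ->
     (P (Imp a b) -> ~ P a \/ P b) /\ (P b -> P (Imp a b))) /\
  (forall a b, In (Coimp a b) Sig ->
     (P (Coimp a b) -> P a) /\ (P a -> ~ P b -> P (Coimp a b))).

Definition comparable {W : Type} (le : W -> W -> Prop) (x y : W) : Prop :=
  le x y \/ le y x.

(* (W, le) is a disjoint union of linear posets: a partial order whose
   comparability relation is transitive (its classes are the linear components) *)
Definition disjoint_union_of_linear {W : Type} (le : W -> W -> Prop) : Prop :=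
  (forall x, le x x) /\
  (forall x y z, le x y -> le y z -> le x z) /\
  (forall x y, le x y -> le y x -> x = y) /\
  (forall x y z, comparable le x y -> comparable le y z -> comparable le x z).

Definition labelled_space (Sig : list form) {W : Type}
  (le : W -> W -> Prop) (l : W -> form -> Prop) : Prop :=
  disjoint_union_of_linear le /\
  (forall w, is_type Sig (l w)) /\
  (forall w v f, le w v -> l v f -> l w f) /\
  (forall w a b, In (Imp a b) Sig -> ~ l w (Imp a b) ->
     exists v, le v w /\ l v a /\ ~ l v b) /\
  (forall w a b, l w (Coimp a b) -> exists v, le w v /\ l v a /\ ~ l v b).

Fixpoint iterR {W : Type} (R : W -> W -> Prop) (n : nat) (w v : W) : Prop :=
  match n with
  | O => w = v
  | S n => exists u, R w u /\ iterR R n u v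
  end.

Definition convex {W : Type} (le : W -> W -> Prop) (R : W -> W -> Prop) : Prop :=
  (forall x y1 y2 z, R x y1 -> R x y2 -> le y1 z -> le z y2 -> R x z) /\
  (forall y x1 x2 z, R x1 y -> R x2 y -> le x1 z -> le z x2 -> R z y).

Definition fully_confluent {W : Type} (le : W -> W -> Prop) (R : W -> W -> Prop)
  : Prop :=
  (forall x x' y', le x x' -> R x' y' -> exists y, R x y /\ le y y') /\
  (forall x x' y, le x x' -> R x y -> exists y', R x' y' /\ le y y') /\
  (forall x' y' y, R x' y' -> le y y' -> exists x, le x x' /\ R x y) /\
  (forall x y y', R x y -> le y y' -> exists x', le x x' /\ R x' y').

Definition bi_serial {W : Type} (R : W -> W -> Prop) : Prop :=
  (forall x, exists y, R x y) /\ (forall y, exists x, R x y).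

Definition sensible (Sig : list form) {W : Type} (l : W -> form -> Prop)
  (R : W -> W -> Prop) : Prop :=
  forall w v, R w v ->
  (forall a, In (Next a) Sig -> (l w (Next a) <-> l v a)) /\
  (forall a, In (Prev a) Sig -> (l v (Prev a) <-> l w a)) /\
  (forall a, In (Glob a) Sig -> (l w (Glob a) <-> l w a /\ l v (Glob a))) /\
  (forall a, In (Hist a) Sig -> (l v (Hist a) <-> l v a /\ l w (Hist a))) /\
  (forall a b, In (Until a b) Sig ->
     (l w (Until a b) <-> l w b \/ (l w a /\ l v (Until a b)))) /\
  (forall a b, In (Since a b) Sig ->
     (l v (Since a b) <-> l v b \/ (l v a /\ l w (Since a b)))).

Definition omega_sensible (Sig : list form) {W : Type} (l : W -> form -> Prop)
  (R : W -> W -> Prop) : Prop :=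
  (forall w a, In (Glob a) Sig -> ~ l w (Glob a) ->
     exists n v, iterR R n w v /\ ~ l v a) /\
  (forall w a, In (Hist a) Sig -> ~ l w (Hist a) ->
     exists n v, iterR R n v w /\ ~ l v a) /\
  (forall w a b, l w (Until a b) -> exists n v, iterR R n w v /\ l v b) /\
  (forall w a b, l w (Since a b) -> exists n v, iterR R n v w /\ l v b).

Definition quasimodel (Sig : list form) {W : Type} (le : W -> W -> Prop)
  (l : W -> form -> Prop) (R : W -> W -> Prop) : Prop :=
  labelled_space Sig le l /\ bi_serial R /\ fully_confluent le R /\
  convex le R /\ sensible Sig l R /\ omega_sensible Sig l R.

(* R_T on T = {-(i'+l'-1), ..., i+l-1} : the "double lasso" *)
Definition RT (i i' l l' : nat) (a b : Z) : Prop :=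
  let lo := (- (Z.of_nat i' + Z.of_nat l' - 1))%Z in
  let hi := (Z.of_nat i + Z.of_nat l - 1)%Z in
  ((lo <= a <= hi - 1)%Z /\ b = (a + 1)%Z) \/
  (a = hi /\ b = Z.of_nat i) \/
  (a = (- Z.of_nat i')%Z /\ b = lo).

Definition ultimately_periodic (Sig : list form) {W : Type}
  (le : W -> W -> Prop) (l : W -> form -> Prop) (R : W -> W -> Prop) : Prop :=
  quasimodel Sig le l R /\
  exists (i i' l0 l0' : nat) (pi : W -> Z),
    1 <= l0 /\ 1 <= l0' /\
    (forall w, (- (Z.of_nat i' + Z.of_nat l0' - 1) <= pi w <= Z.of_nat i + Z.of_nat l0 - 1)%Z) /\
    (* each fibre pi^{-1}(t), t in T, is exactly one linear component *)
    (forall t, (- (Z.of_nat i' + Z.of_nat l0' - 1) <= t <= Z.of_nat i + Z.of_nat l0 - 1)%Z ->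
       (exists w, pi w = t) /\
       (forall w v, pi w = t -> (pi v = t <-> comparable le w v))) /\
    (forall w v, R w v -> RT i i' l0 l0' (pi w) (pi v)).

Definition height_le {W : Type} (le : W -> W -> Prop) (h : nat) : Prop :=
  forall c : list W, Sorted (fun x y => le x y /\ x <> y) c -> length c <= h.

(* Main.v *)
Require Import Defs.
From Stdlib Require Import List ZArith Sorted.
From Stdlib Require Import Lia Classical ClassicalEpsilon ProofIrrelevance.
Import ListNotations.

Lemma subf_refl f : In f (subf f).
Proof. destruct f; simpl; auto. Qed.

Lemma subf_trans f g h : In g (subf f) -> In h (subf g) -> In h (subf f).
Proof.
  revert g h; induction f; intros g h Hg Hh; simpl in Hg; destruct Hg as [<-|Hg]; auto;
  simpl; right; try (apply in_app_or in Hg; apply in_or_app; destruct Hg as [Hg|Hg];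
    [left; eauto | right; eauto]); eauto.
Qed.


Ltac sub_tac H := eapply subf_trans; [exact H | simpl; auto 6 using in_or_app, subf_refl].

Lemma iter_shift {T} (f : T -> T) n x : Nat.iter n f (f x) = f (Nat.iter n f x).
Proof. induction n; simpl; congruence. Qed.

Lemma filter_le {A} (L : list A) g g' : (forall x, In x L -> g' x = true -> g x = true) ->
  length (filter g' L) <= length (filter g L).
Proof.
  induction L as [|a L IH]; simpl; intros H; auto.
  destruct (g' a) eqn:E1, (g a) eqn:E2; simpl.
  - apply le_n_S, IH; auto.
  - rewrite H in E2; auto. discriminate.
  - apply le_S, IH; auto.
  - apply IH; auto.
Qed.

Lemma filter_lt {A} (L : list A) g g' : (forall x, In x L -> g' x = true -> g x = true) ->
  filter g' L <> filter g L -> length (filter g' L) < length (filter g L).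
Proof.
  induction L as [|a L IH]; simpl; intros H Hn.
  - congruence.
  - destruct (g' a) eqn:E1, (g a) eqn:E2; simpl.
    + apply Arith_base.lt_n_S_stt, IH; auto. intro E; apply Hn; congruence.
    + rewrite H in E2; auto. discriminate.
    + apply Nat.lt_succ_r, filter_le; auto.
    + apply IH; auto.
Qed.

Lemma chain_len {A} (Rl : A -> A -> Prop) (m : A -> nat) :
  (forall x y, Rl x y -> m y < m x) ->
  forall c x, Sorted Rl (x :: c) -> length (x :: c) <= m x + 1.
Proof.
  intros Hm. induction c as [|y c IH]; intros x Hs; simpl; [lia|].
  inversion Hs; subst. inversion H2; subst.
  specialize (IH y H1). apply Hm in H0. simpl in IH. lia.
Qed.

Fixpoint sublists {A} (L : list A) : list (list A) :=
  match L with
  | [] => [[]]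
  | x :: L' => map (cons x) (sublists L') ++ sublists L'
  end.

Lemma filter_in_sublists {A} (L : list A) g : In (filter g L) (sublists L).
Proof.
  induction L as [|a L IH]; simpl; auto.
  apply in_or_app. destruct (g a); [left; apply in_map|right]; auto.
Qed.

Lemma pigeon {A} (L : list A) : forall (f : nat -> A), (forall n, In (f n) L) ->
  exists a, forall N, exists n, N <= n /\ f n = a.
Proof.
  induction L as [|a L IH]; intros f Hf.
  - destruct (Hf 0).
  - destruct (classic (forall N, exists n, N <= n /\ f n = a)) as [H|H].
    + exists a; auto.
    + apply not_all_ex_not in H as [N0 H].
      destruct (IH (fun k => f (k + N0))) as [a' Ha'].
      * intros k. destruct (Hf (k + N0)) as [E|E]; auto.
        exfalso. apply H. exists (k + N0). split; [lia|auto].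
      * exists a'. intros N. destruct (Ha' N) as [n [Hn E]]. exists (n + N0). split; [lia|auto].
Qed.

Lemma bound_list {A} (L : list A) (Q : A -> Z -> Prop) :
  (forall x N N', (N <= N')%Z -> Q x N -> Q x N') ->
  (forall x, In x L -> exists N, Q x N) -> exists N, forall x, In x L -> Q x N.
Proof.
  intros Hm. induction L as [|a L IH]; intros H.
  - exists 0%Z. intros x [].
  - destruct (H a (or_introl eq_refl)) as [Na Ha].
    destruct IH as [NL HL]. { intros x Hx. apply H. right; auto. }
    exists (Z.max Na NL). intros x [<-|Hx].
    + apply Hm with Na; auto. lia.
    + apply Hm with NL; auto. lia.
Qed.

Section Model.
Variables (W0 T0 : Type) (le0 : W0 -> W0 -> Prop) (S Sinv : T0 -> T0)
  (V : nat -> W0 -> T0 -> Prop).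
Hypothesis Hlin : is_linear_order le0.
Hypothesis HSS : forall t, S (Sinv t) = t.
Hypothesis HSS' : forall t, Sinv (S t) = t.
Hypothesis HV : forall p w v t, le0 v w -> V p w t -> V p v t.

Notation sat := (sat le0 S Sinv V).

Lemma le0_refl x : le0 x x. Proof. apply Hlin. Qed.
Lemma le0_trans x y z : le0 x y -> le0 y z -> le0 x z. Proof. apply Hlin. Qed.
Lemma le0_tot x y : le0 x y \/ le0 y x. Proof. apply Hlin. Qed.

Lemma persist f : forall w v t, le0 v w -> sat f w t -> sat f v t.
Proof.
  induction f; simpl; intros w v t Hvw H; eauto.
  - destruct H; split; eauto.
  - destruct H; [left|right]; eauto.
  - intros u Hu. apply H. eapply le0_trans; eauto.
  - destruct H as [u [Hu H]]. exists u. split; auto. eapply le0_trans; eauto.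
  - destruct H as [n [Hn Hk]]. exists n. split; eauto.
  - destruct H as [n [Hn Hk]]. exists n. split; eauto.
Qed.

Lemma sem_glob a w t : sat (Glob a) w t <-> sat a w t /\ sat (Glob a) w (S t).
Proof.
  simpl; unfold iterate; split.
  - intros H. split. apply (H 0). intros n. rewrite iter_shift. apply (H (Datatypes.S n)).
  - intros [H1 H2] [|n]; simpl; auto. rewrite <- iter_shift. apply H2.
Qed.

Lemma sem_hist a w t : sat (Hist a) w (S t) <-> sat a w (S t) /\ sat (Hist a) w t.
Proof.
  simpl; unfold iterate; split.
  - intros H. split. apply (H 0). intros n. specialize (H (Datatypes.S n)).
    simpl in H. rewrite <- iter_shift, HSS' in H. exact H.
  - intros [H1 H2] [|n]; simpl; auto. rewrite <- iter_shift, HSS'. apply H2.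
Qed.

Lemma sem_until a b w t : sat (Until a b) w t <->
  sat b w t \/ (sat a w t /\ sat (Until a b) w (S t)).
Proof.
  simpl; unfold iterate; split.
  - intros [[|n] [Hb Ha]]. left; exact Hb.
    right. split. apply (Ha 0); lia.
    exists n. split. rewrite iter_shift. exact Hb.
    intros k Hk. rewrite iter_shift. apply (Ha (Datatypes.S k)); lia.
  - intros [Hb|[Ha [n [Hb Hk]]]].
    + exists 0. split; auto. intros; lia.
    + exists (Datatypes.S n). split. simpl. rewrite <- iter_shift. exact Hb.
      intros [|k] Hk'. exact Ha. simpl. rewrite <- iter_shift. apply Hk. lia.
Qed.

Lemma sem_since a b w t : sat (Since a b) w (S t) <->
  sat b w (S t) \/ (sat a w (S t) /\ sat (Since a b) w t).
Proof.
  simpl; unfold iterate; split.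
  - intros [[|n] [Hb Ha]]. left; exact Hb.
    right. split. apply (Ha 0); lia.
    exists n. split. simpl in Hb. rewrite <- iter_shift, HSS' in Hb. exact Hb.
    intros k Hk. specialize (Ha (Datatypes.S k)). simpl in Ha.
    rewrite <- iter_shift, HSS' in Ha. apply Ha; lia.
  - intros [Hb|[Ha [n [Hb Hk]]]].
    + exists 0. split; auto. intros; lia.
    + exists (Datatypes.S n). split. simpl. rewrite <- iter_shift, HSS'. exact Hb.
      intros [|k] Hk'. exact Ha. simpl. rewrite <- iter_shift, HSS'. apply Hk. lia.
Qed.

Variable tstar : T0.
Variable wstar : W0.

Definition time (n : Z) : T0 :=
  if Z.leb 0 n then Nat.iter (Z.to_nat n) S tstar else Nat.iter (Z.to_nat (- n)) Sinv tstar.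

Lemma time_succ n : time (n + 1) = S (time n).
Proof.
  unfold time. destruct (Z.leb_spec 0 n).
  - destruct (Z.leb_spec 0 (n+1)); [|lia].
    replace (Z.to_nat (n+1)) with (Datatypes.S (Z.to_nat n)) by lia. reflexivity.
  - destruct (Z.eq_dec n (-1)).
    + subst. simpl. rewrite HSS. reflexivity.
    + destruct (Z.leb_spec 0 (n+1)); [lia|].
      replace (Z.to_nat (-n)) with (Datatypes.S (Z.to_nat (-(n+1)))) by lia.
      simpl. rewrite HSS. reflexivity.
Qed.

Lemma time_fwd k n : Nat.iter k S (time n) = time (n + Z.of_nat k).
Proof.
  induction k. simpl. f_equal; lia.
  simpl. rewrite IHk, <- time_succ. f_equal; lia.
Qed.

Lemma time_bwd k n : Nat.iter k Sinv (time n) = time (n - Z.of_nat k).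
Proof.
  induction k. simpl. f_equal; lia.
  simpl. rewrite IHk.
  replace (n - Z.of_nat k)%Z with ((n - Z.of_nat (Datatypes.S k)) + 1)%Z by lia.
  rewrite time_succ, HSS'. reflexivity.
Qed.

Definition bdec (P : Prop) : bool := if excluded_middle_informative P then true else false.
Lemma bdec_true P : bdec P = true <-> P.
Proof. unfold bdec. destruct (excluded_middle_informative P); split; intros; auto; try discriminate; contradiction. Qed.

Variable phi : form.
Definition Sig := subf phi.
Definition Signd := nodup form_eq_dec Sig.

Definition lab (n : Z) (w : W0) : list form :=
  filter (fun f => bdec (sat f w (time n))) Signd.

Lemma in_lab f n w : In f (lab n w) <-> In f Sig /\ sat f w (time n).
Proof.
  unfold lab. rewrite filter_In, bdec_true. unfold Signd. rewrite nodup_In. tauto.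
Qed.

Lemma lab_mono n w v : le0 v w -> incl (lab n w) (lab n v).
Proof.
  intros H f Hf. apply in_lab in Hf. apply in_lab. destruct Hf; split; auto.
  eapply persist; eauto.
Qed.

Lemma filter_antisym {A} (L : list A) g g' :
  incl (filter g L) (filter g' L) -> incl (filter g' L) (filter g L) -> filter g L = filter g' L.
Proof.
  intros H1 H2. apply filter_ext_in. intros a Ha.
  destruct (g a) eqn:E1, (g' a) eqn:E2; auto.
  - assert (In a (filter g' L)) by (apply H1, filter_In; auto). apply filter_In in H as [_ H]. congruence.
  - assert (In a (filter g L)) by (apply H2, filter_In; auto). apply filter_In in H as [_ H]. congruence.
Qed.

Lemma lab_antisym n w n' w' : incl (lab n w) (lab n' w') -> incl (lab n' w') (lab n w) ->
  lab n w = lab n' w'.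
Proof. unfold lab. apply filter_antisym. Qed.

Lemma lab_tot n w v : incl (lab n w) (lab n v) \/ incl (lab n v) (lab n w).
Proof. destruct (le0_tot w v) as [H|H]; [right|left]; apply lab_mono; auto. Qed.

Lemma sandwich n w1 w w2 : le0 w1 w -> le0 w w2 -> lab n w1 = lab n w2 -> lab n w = lab n w1.
Proof.
  intros H1 H2 E. apply lab_antisym.
  - apply lab_mono; auto.
  - rewrite E. apply lab_mono; auto.
Qed.

Definition Mom (a b : Z) := forall w, exists w', lab b w' = lab a w.


Lemma type_lab n w : is_type Sig (fun f => In f (lab n w)).
Proof.
  unfold is_type. setoid_rewrite in_lab. unfold Sig.
  split; [|split; [|split; [|split]]].
  - tauto.
  - intros a b H. assert (Ha : In a (subf phi)) by sub_tac H.
    assert (Hb : In b (subf phi)) by sub_tac H. simpl. tauto.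
  - intros a b H. assert (Ha : In a (subf phi)) by sub_tac H.
    assert (Hb : In b (subf phi)) by sub_tac H. simpl. tauto.
  - intros a b H. assert (Ha : In a (subf phi)) by sub_tac H.
    assert (Hb : In b (subf phi)) by sub_tac H. simpl. split.
    + intros [_ H1]. destruct (classic (sat a w (time n))) as [Ha'|Ha'].
      * right. split; auto. apply H1; auto. apply le0_refl.
      * left. tauto.
    + intros [_ H1]. split; auto. intros v Hv _. eapply persist; eauto.
  - intros a b H. assert (Ha : In a (subf phi)) by sub_tac H.
    assert (Hb : In b (subf phi)) by sub_tac H. simpl. split.
    + intros [_ [v [Hv [H1 _]]]]. split; auto. eapply persist; eauto.
    + intros [_ H1] H2. split; auto. exists w. split; [apply le0_refl|]. tauto.
Qed.


Section Constr.
Variables u0 u1 t0 t1 : Z.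
Hypothesis Hord : (u0 <= u1 /\ u1 <= t0 /\ t0 <= t1)%Z.
Hypothesis HmL1 : Mom (u1 + 1) u0.
Hypothesis HmL2 : Mom u0 (u1 + 1).
Hypothesis HmR1 : Mom (t1 + 1) t0.
Hypothesis HmR2 : Mom t0 (t1 + 1).

Definition Edge (p q : Z) : Prop :=
  ((u0 <= p < t1)%Z /\ q = (p + 1)%Z) \/ (p = t1 /\ q = t0) \/ (p = u1 /\ q = u0).

Lemma Mom_refl a : Mom a a.
Proof. intros w. exists w. reflexivity. Qed.

Lemma edge_mom p q : Edge p q -> Mom (p + 1) q /\ Mom q (p + 1).
Proof.
  intros [[_ E]|[[E1 E2]|[E1 E2]]]; rewrite ?E, ?E1, ?E2; auto using Mom_refl.
Qed.

Lemma edge_bnd p q : Edge p q -> (u0 <= q <= t1)%Z.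
Proof. unfold Edge. lia. Qed.

Definition Pt := {x : Z * list form | (u0 <= fst x <= t1)%Z /\ exists w, snd x = lab (fst x) w}.
Definition pos (x : Pt) : Z := fst (proj1_sig x).
Definition lb (x : Pt) : list form := snd (proj1_sig x).

Lemma pt_eq (x y : Pt) : pos x = pos y -> lb x = lb y -> x = y.
Proof.
  destruct x as [[p s] Hx], y as [[q r] Hy]; unfold pos, lb; simpl; intros -> ->.
  f_equal. apply proof_irrelevance.
Qed.

Lemma pt_real (x : Pt) : exists w, lb x = lab (pos x) w.
Proof. destruct (proj2_sig x) as [_ H]; exact H. Qed.
Lemma pt_bnd (x : Pt) : (u0 <= pos x <= t1)%Z.
Proof. destruct (proj2_sig x) as [H _]; exact H. Qed.

Definition mk (p : Z) (w : W0) (H : (u0 <= p <= t1)%Z) : Pt :=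
  exist _ (p, lab p w) (conj H (ex_intro _ w eq_refl)).
Lemma mk_pos p w H : pos (mk p w H) = p. Proof. reflexivity. Qed.
Lemma mk_lb p w H : lb (mk p w H) = lab p w. Proof. reflexivity. Qed.

Definition Qle (x y : Pt) : Prop := pos x = pos y /\ incl (lb y) (lb x).
Definition Ql (x : Pt) (f : form) : Prop := In f (lb x).
Definition QR (x y : Pt) : Prop :=
  Edge (pos x) (pos y) /\ exists w, lb x = lab (pos x) w /\ lb y = lab (pos x + 1) w.

Lemma Qle_refl x : Qle x x.
Proof. split; auto. apply incl_refl. Qed.

Lemma succ_pt p q w : Edge p q -> exists y : Pt, pos y = q /\ lb y = lab (p + 1) w.
Proof.
  intros HE. destruct (edge_mom p q HE) as [M1 _]. destruct (M1 w) as [w' Hw'].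
  exists (mk q w' (edge_bnd p q HE)). split; auto.
Qed.

Lemma pred_pt p q w (Hp : (u0 <= p <= t1)%Z) : Edge p q ->
  exists v, lab (p + 1) v = lab q w.
Proof.
  intros HE. destruct (edge_mom p q HE) as [_ M2]. apply M2.
Qed.

Lemma Q_labelled : labelled_space Sig Qle Ql.
Proof.
  split; [|split; [|split; [|split]]].
  - split; [|split; [|split]].
    + apply Qle_refl.
    + intros x y z [H1 H2] [H3 H4]. split. congruence. eapply incl_tran; eauto.
    + intros x y [H1 H2] [H3 H4]. apply pt_eq; auto.
      destruct (pt_real x) as [wx Ex], (pt_real y) as [wy Ey].
      rewrite Ex, Ey in *. rewrite H1 in *. apply lab_antisym; auto.
    + intros x y z Hxy Hyz.
      assert (pos x = pos z) by (destruct Hxy as [[]|[]], Hyz as [[]|[]]; congruence).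
      destruct (pt_real x) as [wx Ex], (pt_real z) as [wz Ez].
      destruct (lab_tot (pos x) wx wz) as [I|I]; [right|left]; split; auto;
        rewrite Ex, Ez; rewrite H in *; auto.
  - intros x. destruct (pt_real x) as [w E]. unfold Ql. rewrite E. apply type_lab.
  - intros x y f [_ H] Hf. apply H, Hf.
  - intros x a b HS Hn. destruct (pt_real x) as [w E]. unfold Ql in Hn. rewrite E, in_lab in Hn.
    assert (~ sat (Imp a b) w (time (pos x))) by tauto.
    simpl in H. apply not_all_ex_not in H as [v H].
    destruct (classic (le0 v w /\ sat a v (time (pos x)) /\ ~ sat b v (time (pos x)))) as [Hv|Hv].
    2:{ exfalso. apply H. intros H1 H2. apply NNPP. intro. apply Hv. auto. }
    exists (mk (pos x) v (pt_bnd x)). unfold Ql, Qle. rewrite mk_lb, mk_pos, !in_lab.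
    assert (In a Sig) by (unfold Sig in *; sub_tac HS).
    assert (In b Sig) by (unfold Sig in *; sub_tac HS).
    split; [split; auto|]. rewrite E. apply lab_mono. tauto. tauto.
  - intros x a b Hc. destruct (pt_real x) as [w E]. unfold Ql in Hc. rewrite E, in_lab in Hc.
    destruct Hc as [HS [v [Hv [Ha Hb]]]].
    exists (mk (pos x) v (pt_bnd x)). unfold Ql, Qle. rewrite mk_lb, mk_pos, !in_lab.
    assert (In a Sig) by (unfold Sig in *; sub_tac HS).
    split; [split; auto|]. rewrite E. apply lab_mono. auto. tauto.
Qed.


Lemma eq_by_incl (x y : Pt) : pos x = pos y -> incl (lb x) (lb y) -> incl (lb y) (lb x) -> x = y.
Proof.
  intros Hp H1 H2. apply pt_eq; auto.
  destruct (pt_real x) as [wx Ex], (pt_real y) as [wy Ey].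
  rewrite Ex, Ey in *. rewrite Hp in *. apply lab_antisym; auto.
Qed.

Lemma Q_biserial : bi_serial QR.
Proof.
  split.
  - intros x. destruct (pt_real x) as [w E].
    assert (HE : exists q, Edge (pos x) q).
    { pose proof (pt_bnd x). destruct (Z.eq_dec (pos x) t1).
      - exists t0. right; left; auto.
      - exists (pos x + 1)%Z. left. split; [lia|auto]. }
    destruct HE as [q HE]. destruct (succ_pt _ _ w HE) as [y [Py Ly]].
    exists y. split. rewrite Py; auto. exists w. auto.
  - intros y. destruct (pt_real y) as [w E].
    assert (HE : exists p, (u0 <= p <= t1)%Z /\ Edge p (pos y)).
    { pose proof (pt_bnd y). destruct (Z.eq_dec (pos y) u0).
      - exists u1. split. lia. right; right; auto.
      - exists (pos y - 1)%Z. split. lia. left. split; lia. }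
    destruct HE as [p [Hp HE]]. destruct (pred_pt p (pos y) w Hp HE) as [v Hv].
    exists (mk p v Hp). split. rewrite mk_pos; auto. exists v. rewrite mk_pos, mk_lb.
    split; auto. rewrite Hv; auto.
Qed.

Lemma Q_confluent : fully_confluent Qle QR.
Proof.
  split; [|split; [|split]].
  - intros x x' y' [Hp Hi] [HE [w' [E1 E2]]].
    destruct (pt_real x) as [w Ex].
    destruct (le0_tot w w') as [Hw|Hw].
    + destruct (succ_pt _ _ w HE) as [y [Py Ly]]. exists y. split.
      * split. rewrite Py, Hp; auto. exists w. rewrite Ly, <- Hp. auto.
      * split. congruence. rewrite E2, Ly. apply lab_mono; auto.
    + assert (x = x').
      { apply eq_by_incl; auto. rewrite Ex, E1, Hp. apply lab_mono; auto. }
      subst. exists y'. split. split; eauto. apply Qle_refl.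
  - intros x x' y [Hp Hi] [HE [w [E1 E2]]].
    destruct (pt_real x') as [w' Ex'].
    destruct (le0_tot w w') as [Hw|Hw].
    + destruct (succ_pt _ _ w' HE) as [y' [Py Ly]]. exists y'. split.
      * split. rewrite Py, <- Hp; auto. exists w'. rewrite Ly, Hp. auto.
      * split. congruence. rewrite E2, Ly. apply lab_mono; auto.
    + assert (x = x').
      { apply eq_by_incl; auto. rewrite Ex', E1, Hp. apply lab_mono; auto. }
      subst. exists y. split. split; eauto. apply Qle_refl.
  - intros x' y' y [HE [w' [E1 E2]]] [Hp Hi].
    destruct (pt_real y) as [wy Ey].
    destruct (pred_pt (pos x') (pos y') wy (pt_bnd x') HE) as [v Hv].
    destruct (le0_tot v w') as [Hw|Hw].
    + exists (mk (pos x') v (pt_bnd x')). split.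
      * split. auto. rewrite mk_lb, E1. apply lab_mono; auto.
      * split. rewrite mk_pos, Hp; auto. exists v. rewrite mk_pos, mk_lb, Ey, Hp, Hv. auto.
    + assert (y = y').
      { apply eq_by_incl; auto. rewrite E2, Ey, Hp, <- Hv. apply lab_mono; auto. }
      subst. exists x'. split. apply Qle_refl. split; eauto.
  - intros x y y' [HE [w [E1 E2]]] [Hp Hi].
    destruct (pt_real y') as [wy Ey].
    destruct (pred_pt (pos x) (pos y) wy (pt_bnd x) HE) as [v Hv].
    destruct (le0_tot w v) as [Hw|Hw].
    + exists (mk (pos x) v (pt_bnd x)). split.
      * split. auto. rewrite mk_lb, E1. apply lab_mono; auto.
      * split. rewrite mk_pos, <- Hp; auto. exists v. rewrite mk_pos, mk_lb, Ey, <- Hp, Hv. auto.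
    + assert (y = y').
      { apply eq_by_incl; auto. rewrite E2, Ey, <- Hp, <- Hv. apply lab_mono; auto. }
      subst. exists x. split. apply Qle_refl. split; eauto.
Qed.

Lemma Q_convex : convex Qle QR.
Proof.
  split.
  - intros x y1 y2 z [HE1 [w1 [E11 E12]]] [HE2 [w2 [E21 E22]]] [Hp1 Hi1] [Hp2 Hi2].
    destruct (pt_real z) as [wz Ez].
    assert (HEz : Edge (pos x) (pos z)) by (rewrite <- Hp1; auto).
    destruct (pred_pt (pos x) (pos z) wz (pt_bnd x) HEz) as [v Hv].
    rewrite <- Ez in Hv.
    destruct (le0_tot v w1) as [Hw|Hw].
    + assert (z = y1).
      { apply eq_by_incl; auto. rewrite <- Hv, E12. apply lab_mono; auto. }
      subst; split; eauto.
    + destruct (le0_tot v w2) as [Hw'|Hw'].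
      * split; auto. exists v. split; auto.
        rewrite E11. symmetry. apply sandwich with w2; auto. congruence.
      * assert (z = y2).
        { apply eq_by_incl; auto. rewrite <- Hv, E22. apply lab_mono; auto. }
        subst; split; eauto.
  - intros y x1 x2 z [HE1 [w1 [E11 E12]]] [HE2 [w2 [E21 E22]]] [Hp1 Hi1] [Hp2 Hi2].
    destruct (pt_real z) as [wz Ez].
    destruct (le0_tot wz w1) as [Hw|Hw].
    + assert (z = x1).
      { apply eq_by_incl; auto. rewrite Ez, E11, Hp1. apply lab_mono; auto. }
      subst; split; eauto.
    + destruct (le0_tot wz w2) as [Hw'|Hw'].
      * split. rewrite <- Hp1; auto. exists wz. split; auto.
        rewrite E12, Hp1. symmetry. apply sandwich with w2; auto.
        rewrite <- Hp1, <- E12, E22, <- Hp2, Hp1. auto.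
      * assert (z = x2).
        { apply eq_by_incl; auto. rewrite Ez, E21, Hp2. apply lab_mono; auto. }
        subst; split; eauto.
Qed.


Lemma sub_of a f : In f Sig -> In a (subf f) -> In a Sig.
Proof. unfold Sig. intros H1 H2. eapply subf_trans; eauto. Qed.

Ltac sub2 H := apply (sub_of _ _ H); simpl; auto 6 using in_or_app, subf_refl.

Lemma Q_sensible : sensible Sig Ql QR.
Proof.
  intros x y [HE [w [E1 E2]]]. unfold Ql. rewrite E1, E2.
  split; [|split; [|split; [|split; [|split]]]].
  - intros a H. rewrite !in_lab, time_succ. assert (In a Sig) by sub2 H. simpl. tauto.
  - intros a H. rewrite !in_lab, time_succ. assert (In a Sig) by sub2 H. simpl. rewrite HSS'. tauto.
  - intros a H. rewrite !in_lab, time_succ. assert (In a Sig) by sub2 H. rewrite sem_glob. tauto.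
  - intros a H. rewrite !in_lab, time_succ. assert (In a Sig) by sub2 H. rewrite sem_hist. tauto.
  - intros a b H. rewrite !in_lab, time_succ. assert (In a Sig) by sub2 H. assert (In b Sig) by sub2 H.
    rewrite sem_until. tauto.
  - intros a b H. rewrite !in_lab, time_succ. assert (In a Sig) by sub2 H. assert (In b Sig) by sub2 H.
    rewrite sem_since. tauto.
Qed.

Lemma iterR_app {W} (R : W -> W -> Prop) n m x y z :
  iterR R n x y -> iterR R m y z -> iterR R (n + m) x z.
Proof.
  revert x. induction n; simpl; intros x H1 H2.
  - subst; auto.
  - destruct H1 as [u [Hu H1]]. exists u. split; eauto.
Qed.

Lemma path_fwd (k : nat) : forall (x y : Pt) w, lb x = lab (pos x) w ->
  pos y = (pos x + Z.of_nat k)%Z -> lb y = lab (pos y) w -> iterR QR k x y.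
Proof.
  induction k; intros x y w Ex Py Ey; simpl.
  - apply pt_eq. lia. rewrite Ex, Ey. f_equal. lia.
  - pose proof (pt_bnd x). pose proof (pt_bnd y).
    assert (Hz : (u0 <= pos x + 1 <= t1)%Z) by lia.
    exists (mk _ w Hz). split.
    + unfold QR. change (pos (mk _ w Hz)) with (pos x + 1)%Z. change (lb (mk _ w Hz)) with (lab (pos x + 1) w). split. left; split; [lia|auto]. exists w; auto.
    + apply IHk with w; rewrite ?mk_pos, ?mk_lb; auto. lia.
Qed.

Hypothesis HF_G : forall w a, In (Glob a) Sig -> ~ sat (Glob a) w (time t0) ->
  exists w' (n : nat), lab t0 w' = lab t0 w /\ (t0 + Z.of_nat n <= t1)%Z /\
    ~ sat a w' (time (t0 + Z.of_nat n)).
Hypothesis HF_U : forall w a b, In (Until a b) Sig -> sat (Until a b) w (time t0) ->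
  exists w' (n : nat), lab t0 w' = lab t0 w /\ (t0 + Z.of_nat n <= t1)%Z /\
    sat b w' (time (t0 + Z.of_nat n)).
Hypothesis HP_H : forall w a, In (Hist a) Sig -> ~ sat (Hist a) w (time u1) ->
  exists w' (n : nat), lab u1 w' = lab u1 w /\ (u0 <= u1 - Z.of_nat n)%Z /\
    ~ sat a w' (time (u1 - Z.of_nat n)).
Hypothesis HP_S : forall w a b, In (Since a b) Sig -> sat (Since a b) w (time u1) ->
  exists w' (n : nat), lab u1 w' = lab u1 w /\ (u0 <= u1 - Z.of_nat n)%Z /\
    sat b w' (time (u1 - Z.of_nat n)).


Lemma Q_omega : omega_sensible Sig Ql QR.
Proof.
  pose proof Hord as Ho.
  split; [|split; [|split]].
  -
    intros x a HS Hn. destruct (pt_real x) as [w Ex]. pose proof (pt_bnd x) as Bx.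
    unfold Ql in Hn. rewrite Ex, in_lab in Hn.
    assert (Hg : ~ sat (Glob a) w (time (pos x))) by tauto.
    assert (HaS : In a Sig) by sub2 HS.
    simpl in Hg. apply not_all_ex_not in Hg as [n Hg]. unfold iterate in Hg.
    rewrite time_fwd in Hg.
    destruct (Z_le_gt_dec (pos x + Z.of_nat n) t1) as [Hle|Hgt].
    + assert (Hb : (u0 <= pos x + Z.of_nat n <= t1)%Z) by lia.
      exists n, (mk _ w Hb). split.
      * apply path_fwd with w; auto.
      * unfold Ql. rewrite mk_lb, in_lab. tauto.
    + assert (G1 : ~ sat (Glob a) w (time (t1 + 1))).
      { simpl. intros H. apply Hg. specialize (H (Z.to_nat (pos x + Z.of_nat n - (t1 + 1)))).
        unfold iterate in H. rewrite time_fwd in H.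
        replace (pos x + Z.of_nat n)%Z with (t1 + 1 + Z.of_nat (Z.to_nat (pos x + Z.of_nat n - (t1 + 1))))%Z by lia.
        exact H. }
      destruct (HmR1 w) as [w' Ew'].
      assert (G2 : ~ sat (Glob a) w' (time t0)).
      { intro H. apply G1. assert (In (Glob a) (lab t0 w')) by (apply in_lab; auto).
        rewrite Ew' in H0. apply in_lab in H0. tauto. }
      destruct (HF_G w' a HS G2) as [w'' [n' [E'' [Hb'' Ha'']]]].
      assert (B1 : (u0 <= t1 <= t1)%Z) by lia.
      assert (B2 : (u0 <= t0 <= t1)%Z) by lia.
      assert (B3 : (u0 <= t0 + Z.of_nat n' <= t1)%Z) by lia.
      exists (Z.to_nat (t1 - pos x) + (1 + n'))%nat, (mk _ w'' B3). split.
      2:{ unfold Ql. rewrite mk_lb, in_lab. tauto. }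
      apply iterR_app with (mk t1 w B1).
      { apply path_fwd with w; auto. rewrite mk_pos. lia. }
      simpl. exists (mk t0 w'' B2). split.
      { split. rewrite !mk_pos. right; left; auto. exists w. rewrite !mk_pos, !mk_lb.
        split; auto. congruence. }
      apply path_fwd with w''; auto.
  -
    intros x a HS Hn. destruct (pt_real x) as [w Ex]. pose proof (pt_bnd x) as Bx.
    unfold Ql in Hn. rewrite Ex, in_lab in Hn.
    assert (Hg : ~ sat (Hist a) w (time (pos x))) by tauto.
    assert (HaS : In a Sig) by sub2 HS.
    simpl in Hg. apply not_all_ex_not in Hg as [n Hg]. unfold iterate in Hg.
    rewrite time_bwd in Hg.
    destruct (Z_le_gt_dec u0 (pos x - Z.of_nat n)) as [Hle|Hgt].
    + assert (Hb : (u0 <= pos x - Z.of_nat n <= t1)%Z) by lia.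
      exists n, (mk _ w Hb). split.
      * apply path_fwd with w; auto. rewrite mk_pos. lia.
      * unfold Ql. rewrite mk_lb, in_lab. tauto.
    + assert (G1 : ~ sat (Hist a) w (time u0)).
      { simpl. intros H. apply Hg. specialize (H (Z.to_nat (u0 - (pos x - Z.of_nat n)))).
        unfold iterate in H. rewrite time_bwd in H.
        replace (pos x - Z.of_nat n)%Z with (u0 - Z.of_nat (Z.to_nat (u0 - (pos x - Z.of_nat n))))%Z by lia.
        exact H. }
      destruct (HmL2 w) as [w' Ew'].
      assert (G2 : ~ sat (Hist a) w' (S (time u1))).
      { intro H. apply G1. rewrite <- time_succ in H.
        assert (In (Hist a) (lab (u1 + 1) w')) by (apply in_lab; auto).
        rewrite Ew' in H0. apply in_lab in H0. tauto. }
      assert (B0 : (u0 <= u0 <= t1)%Z) by lia.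
      assert (P0 : iterR QR (Z.to_nat (pos x - u0)) (mk u0 w B0) x).
      { apply path_fwd with w; auto. rewrite mk_pos. lia. }
      rewrite sem_hist in G2.
      destruct (classic (sat a w' (S (time u1)))) as [Ha'|Ha'].
      * assert (G3 : ~ sat (Hist a) w' (time u1)) by tauto.
        destruct (HP_H w' a HS G3) as [w'' [n' [E'' [Hb'' Ha'']]]].
        assert (B1 : (u0 <= u1 <= t1)%Z) by lia.
        assert (B3 : (u0 <= u1 - Z.of_nat n' <= t1)%Z) by lia.
        exists (n' + (1 + Z.to_nat (pos x - u0)))%nat, (mk _ w'' B3). split.
        2:{ unfold Ql. rewrite mk_lb, in_lab. tauto. }
        apply iterR_app with (mk u1 w'' B1).
        { apply path_fwd with w''; auto. rewrite !mk_pos. lia. }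
        simpl. exists (mk u0 w B0). split; auto.
        split. rewrite !mk_pos. right; right; auto. exists w'. rewrite !mk_pos, !mk_lb.
        split; auto.
      * exists (Z.to_nat (pos x - u0)), (mk u0 w B0). split; auto.
        unfold Ql. rewrite mk_lb, <- Ew', in_lab, time_succ. tauto.
  -
    intros x a b Hu. destruct (pt_real x) as [w Ex]. pose proof (pt_bnd x) as Bx.
    unfold Ql in Hu. rewrite Ex, in_lab in Hu. destruct Hu as [HS Hu].
    assert (HbS : In b Sig) by sub2 HS.
    pose proof Hu as Hu0.
    simpl in Hu. destruct Hu as [n [Hb Ha]]. unfold iterate in Hb, Ha.
    rewrite time_fwd in Hb.
    destruct (Z_le_gt_dec (pos x + Z.of_nat n) t1) as [Hle|Hgt].
    + assert (Hbd : (u0 <= pos x + Z.of_nat n <= t1)%Z) by lia.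
      exists n, (mk _ w Hbd). split.
      * apply path_fwd with w; auto.
      * unfold Ql. rewrite mk_lb, in_lab. tauto.
    + assert (G1 : sat (Until a b) w (time (t1 + 1))).
      { simpl. exists (Z.to_nat (pos x + Z.of_nat n - (t1 + 1))). unfold iterate.
        rewrite time_fwd. split.
        - replace (t1 + 1 + Z.of_nat (Z.to_nat (pos x + Z.of_nat n - (t1 + 1))))%Z
            with (pos x + Z.of_nat n)%Z by lia. exact Hb.
        - intros k Hk. rewrite time_fwd.
          specialize (Ha (Z.to_nat (t1 + 1 - pos x) + k)%nat). unfold iterate in Ha.
          rewrite time_fwd in Ha.
          replace (t1 + 1 + Z.of_nat k)%Z with
            (pos x + Z.of_nat (Z.to_nat (t1 + 1 - pos x) + k))%Z by lia.
          apply Ha. lia. }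
      destruct (HmR1 w) as [w' Ew'].
      assert (G2 : sat (Until a b) w' (time t0)).
      { assert (In (Until a b) (lab (t1 + 1) w)) by (apply in_lab; auto).
        rewrite <- Ew' in H. apply in_lab in H. tauto. }
      destruct (HF_U w' a b HS G2) as [w'' [n' [E'' [Hb'' Ha'']]]].
      assert (B1 : (u0 <= t1 <= t1)%Z) by lia.
      assert (B2 : (u0 <= t0 <= t1)%Z) by lia.
      assert (B3 : (u0 <= t0 + Z.of_nat n' <= t1)%Z) by lia.
      exists (Z.to_nat (t1 - pos x) + (1 + n'))%nat, (mk _ w'' B3). split.
      2:{ unfold Ql. rewrite mk_lb, in_lab. tauto. }
      apply iterR_app with (mk t1 w B1).
      { apply path_fwd with w; auto. rewrite mk_pos. lia. }
      simpl. exists (mk t0 w'' B2). split.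
      { split. rewrite !mk_pos. right; left; auto. exists w. rewrite !mk_pos, !mk_lb.
        split; auto. congruence. }
      apply path_fwd with w''; auto.
  -
    intros x a b Hu. destruct (pt_real x) as [w Ex]. pose proof (pt_bnd x) as Bx.
    unfold Ql in Hu. rewrite Ex, in_lab in Hu. destruct Hu as [HS Hu].
    assert (HbS : In b Sig) by sub2 HS.
    simpl in Hu. destruct Hu as [n [Hb Ha]]. unfold iterate in Hb, Ha.
    rewrite time_bwd in Hb.
    destruct (Z_le_gt_dec u0 (pos x - Z.of_nat n)) as [Hle|Hgt].
    + assert (Hbd : (u0 <= pos x - Z.of_nat n <= t1)%Z) by lia.
      exists n, (mk _ w Hbd). split.
      * apply path_fwd with w; auto. rewrite mk_pos. lia.
      * unfold Ql. rewrite mk_lb, in_lab. tauto.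
    + assert (G1 : sat (Since a b) w (time u0)).
      { simpl. exists (Z.to_nat (u0 - (pos x - Z.of_nat n))). unfold iterate.
        rewrite time_bwd. split.
        - replace (u0 - Z.of_nat (Z.to_nat (u0 - (pos x - Z.of_nat n))))%Z
            with (pos x - Z.of_nat n)%Z by lia. exact Hb.
        - intros k Hk. rewrite time_bwd.
          specialize (Ha (Z.to_nat (pos x - u0) + k)%nat). unfold iterate in Ha.
          rewrite time_bwd in Ha.
          replace (u0 - Z.of_nat k)%Z with
            (pos x - Z.of_nat (Z.to_nat (pos x - u0) + k))%Z by lia.
          apply Ha. lia. }
      destruct (HmL2 w) as [w' Ew'].
      assert (G2 : sat (Since a b) w' (S (time u1))).
      { assert (In (Since a b) (lab u0 w)) by (apply in_lab; auto).
        rewrite <- Ew' in H. apply in_lab in H. rewrite time_succ in H. tauto. }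
      assert (B0 : (u0 <= u0 <= t1)%Z) by lia.
      assert (P0 : iterR QR (Z.to_nat (pos x - u0)) (mk u0 w B0) x).
      { apply path_fwd with w; auto. rewrite mk_pos. lia. }
      rewrite sem_since in G2.
      destruct G2 as [G2|[_ G3]].
      * exists (Z.to_nat (pos x - u0)), (mk u0 w B0). split; auto.
        unfold Ql. rewrite mk_lb, <- Ew', in_lab, time_succ. tauto.
      * destruct (HP_S w' a b HS G3) as [w'' [n' [E'' [Hb'' Ha'']]]].
        assert (B1 : (u0 <= u1 <= t1)%Z) by lia.
        assert (B3 : (u0 <= u1 - Z.of_nat n' <= t1)%Z) by lia.
        exists (n' + (1 + Z.to_nat (pos x - u0)))%nat, (mk _ w'' B3). split.
        2:{ unfold Ql. rewrite mk_lb, in_lab. tauto. }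
        apply iterR_app with (mk u1 w'' B1).
        { apply path_fwd with w''; auto. rewrite !mk_pos. lia. }
        simpl. exists (mk u0 w B0). split; auto.
        split. rewrite !mk_pos. right; right; auto. exists w'. rewrite !mk_pos, !mk_lb.
        split; auto.
Qed.


Lemma Q_qm : quasimodel (subf phi) Qle Ql QR.
Proof.
  split; [exact Q_labelled|]. split; [exact Q_biserial|]. split; [exact Q_confluent|].
  split; [exact Q_convex|]. split; [exact Q_sensible|exact Q_omega].
Qed.

Lemma Q_up : ultimately_periodic (subf phi) Qle Ql QR.
Proof.
  pose proof Hord as Ho.
  split; [exact Q_qm|].
  exists (Z.to_nat (t0 - u1)), 0%nat, (Z.to_nat (t1 - t0 + 1)), (Z.to_nat (u1 - u0 + 1)),
    (fun x => pos x - u1)%Z.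
  split; [lia|]. split; [lia|]. split.
  { intros x. pose proof (pt_bnd x). lia. }
  split.
  - intros t Ht. split.
    + assert (B : (u0 <= t + u1 <= t1)%Z) by lia.
      exists (mk _ wstar B). rewrite mk_pos. lia.
    + intros x y Hx. split.
      * intros Hy. assert (E : pos x = pos y) by lia.
        destruct (pt_real x) as [wx Ex], (pt_real y) as [wy Ey].
        destruct (lab_tot (pos x) wx wy) as [I|I]; [right|left]; split; auto;
          rewrite Ex, Ey, <- E; auto.
      * intros [[E _]|[E _]]; lia.
  - intros x y [HE _]. unfold RT. unfold Edge in HE. lia.
Qed.

Lemma Q_height : height_le Qle (card_sub phi + 1).
Proof.
  intros c Hs. destruct c as [|x c]; simpl; [lia|].
  eapply Nat.le_trans. apply (chain_len (fun x y : Pt => Qle x y /\ x <> y) (fun x => length (lb x))); [|exact Hs].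
  - intros x' y [[Hp Hi] Hn].
    destruct (pt_real x') as [wx Ex], (pt_real y) as [wy Ey].
    rewrite Ex, Ey. rewrite <- Hp. unfold lab. apply filter_lt.
    + intros f Hf Hg. assert (In f (lab (pos x') wx)).
      { rewrite <- Ex. apply Hi. rewrite Ey, <- Hp. apply filter_In; auto. }
      apply filter_In in H. tauto.
    + intro E. apply Hn. apply pt_eq; auto. rewrite Ex, Ey, <- Hp. symmetry. exact E.
  - unfold card_sub. destruct (pt_real x) as [w E]. rewrite E. unfold lab.
    pose proof (filter_length_le (fun f => bdec (sat f w (time (pos x)))) Signd).
    unfold Signd, Sig in *. lia.
Qed.

End Constr.

Definition code (n : Z) : list (list form) :=
  filter (fun Sx => bdec (exists w, lab n w = Sx)) (sublists Signd).

Lemma code_in n : In (code n) (sublists (sublists Signd)).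
Proof. apply filter_in_sublists. Qed.

Lemma code_mom a b : code a = code b -> Mom a b.
Proof.
  intros E w.
  assert (H : In (lab a w) (code a)).
  { apply filter_In. split. apply filter_in_sublists. apply bdec_true. eauto. }
  rewrite E in H. apply filter_In in H as [_ H]. apply (proj1 (bdec_true _)) in H.
  destruct H as [w1 H]. eauto.
Qed.

Lemma fut_bound t0 : exists N,
  (forall w a, In (Glob a) Sig -> ~ sat (Glob a) w (time t0) ->
    exists w' (n : nat), lab t0 w' = lab t0 w /\ (t0 + Z.of_nat n <= N)%Z /\
      ~ sat a w' (time (t0 + Z.of_nat n))) /\
  (forall w a b, In (Until a b) Sig -> sat (Until a b) w (time t0) ->
    exists w' (n : nat), lab t0 w' = lab t0 w /\ (t0 + Z.of_nat n <= N)%Z /\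
      sat b w' (time (t0 + Z.of_nat n))).
Proof.
  set (Q := fun f Sx N => forall w, lab t0 w = Sx ->
    (forall a, f = Glob a -> ~ sat f w (time t0) ->
      exists w' (n : nat), lab t0 w' = Sx /\ (t0 + Z.of_nat n <= N)%Z /\
        ~ sat a w' (time (t0 + Z.of_nat n))) /\
    (forall a b, f = Until a b -> sat f w (time t0) ->
      exists w' (n : nat), lab t0 w' = Sx /\ (t0 + Z.of_nat n <= N)%Z /\
        sat b w' (time (t0 + Z.of_nat n)))).
  assert (Qm : forall f Sx N N', (N <= N')%Z -> Q f Sx N -> Q f Sx N').
  { intros f Sx N N' HN HQ w Hw. destruct (HQ w Hw) as [H1 H2]. split.
    - intros a Ef Hs. destruct (H1 a Ef Hs) as [w' [n [? [? ?]]]]. exists w', n.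
      split; auto. split; auto. lia.
    - intros a b' Ef Hs. destruct (H2 a b' Ef Hs) as [w' [n [? [? ?]]]]. exists w', n.
      split; auto. split; auto. lia. }
  assert (Qe : forall f Sx, exists N, Q f Sx N).
  { intros f Sx.
    destruct (classic (exists w0, lab t0 w0 = Sx /\
      ((exists a, f = Glob a /\ ~ sat f w0 (time t0)) \/
       (exists a b, f = Until a b /\ sat f w0 (time t0))))) as [[w0 [E0 H0]]|H0].
    - destruct H0 as [[a [-> Hs]]|[a [b [-> Hs]]]].
      + simpl in Hs. apply not_all_ex_not in Hs as [n Hs]. unfold iterate in Hs.
        rewrite time_fwd in Hs.
        exists (t0 + Z.of_nat n)%Z. intros w Hw. split.
        * intros a' E _. injection E as <-. exists w0, n. split; auto. split; auto. lia.
        * intros a' b' E. discriminate.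
      + pose proof Hs as Hs'. simpl in Hs'. destruct Hs' as [n [Hb _]]. unfold iterate in Hb.
        rewrite time_fwd in Hb.
        exists (t0 + Z.of_nat n)%Z. intros w Hw. split.
        * intros a' E. discriminate.
        * intros a' b' E _. injection E as <- <-. exists w0, n. split; auto. split; auto. lia.
    - exists 0%Z. intros w Hw. split.
      + intros a E Hs. exfalso. apply H0. exists w. split; auto. left. eauto.
      + intros a b E Hs. exfalso. apply H0. exists w. split; auto. right. eauto. }
  destruct (bound_list Sig (fun f N => forall Sx, In Sx (sublists Signd) -> Q f Sx N))
    as [N HN].
  { intros f N N' HN H Sx HS. eapply Qm; eauto. }
  { intros f _. apply bound_list. intros; eapply Qm; eauto. intros Sx _. apply Qe. }
  exists N. split.
  - intros w a HS Hs. destruct (HN (Glob a) HS (lab t0 w) (filter_in_sublists _ _) w eq_refl)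
      as [H1 _]. apply (H1 a eq_refl Hs).
  - intros w a b HS Hs. destruct (HN (Until a b) HS (lab t0 w) (filter_in_sublists _ _) w eq_refl)
      as [_ H2]. apply (H2 a b eq_refl Hs).
Qed.

Lemma past_bound u1 : exists M,
  (forall w a, In (Hist a) Sig -> ~ sat (Hist a) w (time u1) ->
    exists w' (n : nat), lab u1 w' = lab u1 w /\ (M <= u1 - Z.of_nat n)%Z /\
      ~ sat a w' (time (u1 - Z.of_nat n))) /\
  (forall w a b, In (Since a b) Sig -> sat (Since a b) w (time u1) ->
    exists w' (n : nat), lab u1 w' = lab u1 w /\ (M <= u1 - Z.of_nat n)%Z /\
      sat b w' (time (u1 - Z.of_nat n))).
Proof.
  set (Q := fun f Sx N => forall w, lab u1 w = Sx ->
    (forall a, f = Hist a -> ~ sat f w (time u1) ->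
      exists w' (n : nat), lab u1 w' = Sx /\ (- N <= u1 - Z.of_nat n)%Z /\
        ~ sat a w' (time (u1 - Z.of_nat n))) /\
    (forall a b, f = Since a b -> sat f w (time u1) ->
      exists w' (n : nat), lab u1 w' = Sx /\ (- N <= u1 - Z.of_nat n)%Z /\
        sat b w' (time (u1 - Z.of_nat n)))).
  assert (Qm : forall f Sx N N', (N <= N')%Z -> Q f Sx N -> Q f Sx N').
  { intros f Sx N N' HN HQ w Hw. destruct (HQ w Hw) as [H1 H2]. split.
    - intros a Ef Hs. destruct (H1 a Ef Hs) as [w' [n [? [? ?]]]]. exists w', n.
      split; auto. split; auto. lia.
    - intros a b' Ef Hs. destruct (H2 a b' Ef Hs) as [w' [n [? [? ?]]]]. exists w', n.
      split; auto. split; auto. lia. }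
  assert (Qe : forall f Sx, exists N, Q f Sx N).
  { intros f Sx.
    destruct (classic (exists w0, lab u1 w0 = Sx /\
      ((exists a, f = Hist a /\ ~ sat f w0 (time u1)) \/
       (exists a b, f = Since a b /\ sat f w0 (time u1))))) as [[w0 [E0 H0]]|H0].
    - destruct H0 as [[a [-> Hs]]|[a [b [-> Hs]]]].
      + simpl in Hs. apply not_all_ex_not in Hs as [n Hs]. unfold iterate in Hs.
        rewrite time_bwd in Hs.
        exists (- (u1 - Z.of_nat n))%Z. intros w Hw. split.
        * intros a' E _. injection E as <-. exists w0, n. split; auto. split; auto. lia.
        * intros a' b' E. discriminate.
      + pose proof Hs as Hs'. simpl in Hs'. destruct Hs' as [n [Hb _]]. unfold iterate in Hb.
        rewrite time_bwd in Hb.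
        exists (- (u1 - Z.of_nat n))%Z. intros w Hw. split.
        * intros a' E. discriminate.
        * intros a' b' E _. injection E as <- <-. exists w0, n. split; auto. split; auto. lia.
    - exists 0%Z. intros w Hw. split.
      + intros a E Hs. exfalso. apply H0. exists w. split; auto. left. eauto.
      + intros a b E Hs. exfalso. apply H0. exists w. split; auto. right. eauto. }
  destruct (bound_list Sig (fun f N => forall Sx, In Sx (sublists Signd) -> Q f Sx N))
    as [N HN].
  { intros f N N' HN H Sx HS. eapply Qm; eauto. }
  { intros f _. apply bound_list. intros; eapply Qm; eauto. intros Sx _. apply Qe. }
  exists (- N)%Z. split.
  - intros w a HS Hs. destruct (HN (Hist a) HS (lab u1 w) (filter_in_sublists _ _) w eq_refl)
      as [H1 _]. apply (H1 a eq_refl Hs).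
  - intros w a b HS Hs. destruct (HN (Since a b) HS (lab u1 w) (filter_in_sublists _ _) w eq_refl)
      as [_ H2]. apply (H2 a b eq_refl Hs).
Qed.

Lemma model_main : ~ sat phi wstar tstar ->
  exists (W : Type) (le : W -> W -> Prop) (l : W -> form -> Prop) (R : W -> W -> Prop),
    ultimately_periodic (subf phi) le l R /\
    height_le le (card_sub phi + 1) /\
    exists w, ~ l w phi.
Proof.
  intros Hphi.
  destruct (pigeon _ (fun k => code (Z.of_nat k)) (fun k => code_in _)) as [c Hc].
  destruct (Hc 0) as [k0 [_ Ek0]].
  set (t0 := Z.of_nat k0).
  destruct (fut_bound t0) as [N [HFG HFU]].
  destruct (Hc (Z.to_nat (Z.max N t0) + 1)) as [k1 [Hk1 Ek1]].
  set (t1 := (Z.of_nat k1 - 1)%Z).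
  destruct (pigeon _ (fun k => code (- Z.of_nat k)) (fun k => code_in _)) as [c' Hc'].
  destruct (Hc' 1) as [k0' [Hk0' Ek0']].
  set (u1 := (- Z.of_nat k0' - 1)%Z).
  destruct (past_bound u1) as [M [HPH HPS]].
  destruct (Hc' (Z.to_nat (Z.max (- M) (- u1)))) as [k1' [Hk1' Ek1']].
  set (u0 := (- Z.of_nat k1')%Z).
  assert (Hord : (u0 <= u1 /\ u1 <= t0 /\ t0 <= t1)%Z) by (unfold u0, u1, t0, t1; lia).
  assert (ER : code (t1 + 1) = code t0).
  { unfold t1, t0. replace (Z.of_nat k1 - 1 + 1)%Z with (Z.of_nat k1) by lia. congruence. }
  assert (EL : code (u1 + 1) = code u0).
  { unfold u1, u0. replace (- Z.of_nat k0' - 1 + 1)%Z with (- Z.of_nat k0')%Z by lia. congruence. }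
  assert (B : (u0 <= 0 <= t1)%Z) by (unfold u0, t1; lia).
  exists (Pt u0 t1), (Qle u0 t1), (Ql u0 t1), (QR u0 u1 t0 t1).
  split; [|split].
  - eapply Q_up; eauto.
    + apply code_mom; auto.
    + apply code_mom; auto.
    + apply code_mom; auto.
    + apply code_mom; auto.
    + intros w a HS Hs. destruct (HFG w a HS Hs) as [w' [n [? [? ?]]]].
      exists w', n. split; auto. split; auto. unfold t1. lia.
    + intros w a b HS Hs. destruct (HFU w a b HS Hs) as [w' [n [? [? ?]]]].
      exists w', n. split; auto. split; auto. unfold t1. lia.
    + intros w a HS Hs. destruct (HPH w a HS Hs) as [w' [n [? [? ?]]]].
      exists w', n. split; auto. split; auto. unfold u0. lia.
    + intros w a b HS Hs. destruct (HPS w a b HS Hs) as [w' [n [? [? ?]]]].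
      exists w', n. split; auto. split; auto. unfold u0. lia.
  - eapply Q_height with (u1 := u1) (t0 := t0); eauto.
  - exists (mk u0 t1 0 wstar B). unfold Ql. rewrite mk_lb, in_lab. intros [_ H]. apply Hphi.
    exact H.
Qed.

End Model.

Theorem theorem11p4 (phi : form) :
  falsifiable phi ->
  exists (W : Type) (le : W -> W -> Prop) (l : W -> form -> Prop)
         (R : W -> W -> Prop),
    ultimately_periodic (subf phi) le l R /\
    height_le le (card_sub phi + 1) /\
    exists w, ~ l w phi.
Proof.
  intros [W0 [T0 [le0 [S [Sinv [V [Hlin [HSS [HSS' [HV [w [t Hn]]]]]]]]]]]].
  eapply (model_main W0 T0 le0 S Sinv V Hlin HSS HSS' HV t w phi). exact Hn.
Qed.
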